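(* Let $\mathcal R$ be a reaction network and suppose $\mathcal U\subseteq\mathcal S$ is eliminable in $\mathcal R$ with respect to $\mathcal F\subseteq\mathcal R_{\mathcal U}$. Let $x,x'\in\mathbb{N}_0^n$. (i) If $x$ leads to $x'$ via $\mathcal R^*_{\mathcal U,\mathcal F}$, then $x$ leads to $x'$ via $\mathcal R$. (ii) Suppose moreover that $\mathcal U$ consists of intermediate species, that $\mathcal F=\mathcal R_{\mathcal U}$, and that $(\mathrm{supp}(x)\cup\mathrm{supp}(x'))\cap\mathcal U=\emptyset$. If $x$ leads to $x'$ via $\mathcal R$, then $x$ leads to $x'$ via $\mathcal R^*_{\mathcal U,\mathcal F}$.
   Context: Species $S_1,\dots,S_n$ are the unit vectors of $\mathbb{N}_0^n$ and $\mathcal S=\{S_1,\dots,S_n\}$; for $x\in\mathbb{N}_0^n$, $\mathrm{supp}(x)=\{S_k: x^k>0\}$. A reaction network (RN) is a (possibly infinite) subset $\mathcal R\subseteq\mathbb{N}_0^n\times\mathbb{N}_0^n$ containing no $(y,y')$ with $y=y'$; elements $(y,y')$ are reactions $y\to y'$ with reactant $y$ and product $y'$. For $r_1=(y_1,y_1'),\ r_2=(y_2,y_2')$ define $r_1\oplus r_2=(y_1+0\vee(y_2-y_1'),\ y_2'+0\vee(y_1'-y_2))$ ($\vee$ componentwise maximum); it is associative. $\mathrm{cl}(A)$ is the set of all finite $\oplus$-sums of elements of $A$, including $(0,0)$. $(y_1,y_1')\sim(0,0)$ means $y_1=y_1'$. For $\mathcal U\subseteq\mathcal S$ and a set $B$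 write $B_{\mathcal U}=\{(y,y')\in B:\mathrm{supp}(y)\cap\mathcal U\neq\emptyset\}$, $B_{\mathcal U}'=\{(y,y')\in B:\mathrm{supp}(y')\cap\mathcal U\neq\emptyset\}$. Set $\overline{\mathcal R}=\mathrm{cl}(\mathcal R)$, $\mathcal R_0=\mathcal R\setminus(\mathcal R_{\mathcal U}\cup\mathcal R_{\mathcal U}')$, $\overline{\mathcal R}_0=\overline{\mathcal R}\setminus(\overline{\mathcal R}_{\mathcal U}\cup\overline{\mathcal R}_{\mathcal U}')$. $\mathcal U$ is eliminable in $\mathcal R$ with respect to $\mathcal F\subseteq\mathcal R_{\mathcal U}$ if for every $r_0\in\mathcal R_{\mathcal U}'$ and $r_1\in\mathrm{cl}(\mathcal F)$ with $r_0\oplus r_1\notin\overline{\mathcal R}_{\mathcal U}$ there is $r_2\in\mathrm{cl}(\mathcal F)$ with $r_0\oplus r_1\oplus r_2\in\overline{\mathcal R}_0$. The reduced RN is $\mathcal R^*_{\mathcal U,\mathcal F}=\mathcal R_0\cup\mathcal R_{\mathcal U,\mathcal F}$ with $\mathcal R_{\mathcal U,\mathcal F}=\{r_0\oplus r_1\in\overline{\mathcal R}_0: r_0\in\mathcal R_{\mathcal U}',\ r_1\in\mathrm{cl}(\mathcal F)\}\setminus\{r:r\sim(0,0)\}$. $\mathcal U$ consists of non-interacting species if for every $y\to y'\in\mathcal R$, $\sum_{S_i\in\mathcal U}y^i\le1$ and $\sum_{S_i\in\mathcal U}(y')^i\le1$; it consists of intermediate species if moreover, for every $S_i\in\mathcal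 U$ and $y\to y'\in\mathcal R$, $y^i=1$ implies $y=S_i$ and $(y')^i=1$ implies $y'=S_i$. An ordered sequence of reactions $y_1\to y_1',\dots,y_m\to y_m'$ is active on $x$ if $x+\sum_{i=1}^{k-1}(y_i'-y_i)\ge y_k$ (componentwise) for all $k$; $x$ leads to $x'$ via an RN if there is an ordered sequence of $m\ge0$ of its reactions (repetitions allowed) active on $x$ with $x'=x+\sum_{i=1}^m(y_i'-y_i)$. *)

(* Defs.v *)
From mathcomp Require Import all_boot.
Set Implicit Arguments. Unset Strict Implicit. Unset Printing Implicit Defensive.

(* Complexes: elements of N_0^n, species = indices 'I_n. *)
Definition complex (n : nat) := {ffun 'I_n -> nat}.
Definition reaction (n : nat) := (complex n * complex n)%type.
Definition rset (n : nat) := reaction n -> Prop.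

Definition zero_c n : complex n := [ffun _ => 0].
Definition zero_r n : reaction n := (zero_c n, zero_c n).

Definition is_RN n (R : rset n) : Prop := forall r, R r -> r.1 <> r.2.

(* r1 (+) r2 = (y1 + 0 v (y2 - y1'), y2' + 0 v (y1' - y2)); truncated subn is 0 v (a - b). *)
Definition oplus n (r1 r2 : reaction n) : reaction n :=
  ([ffun i => r1.1 i + (r2.1 i - r1.2 i)], [ffun i => r2.2 i + (r1.2 i - r2.1 i)]).

Definition osum n (s : seq (reaction n)) : reaction n := foldr (@oplus n) (zero_r n) s.
Definition cl n (A : rset n) : rset n :=
  fun r => exists s : seq (reaction n), (forall a, a \in s -> A a) /\ r = osum s.

Definition supp n (y : complex n) : {set 'I_n} := [set i | 0 < y i].

Definition subU n (U : {set 'I_n}) (B : rset n) : rset n :=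
  fun r => B r /\ supp r.1 :&: U != set0.
Definition subU' n (U : {set 'I_n}) (B : rset n) : rset n :=
  fun r => B r /\ supp r.2 :&: U != set0.
Definition sub0 n (U : {set 'I_n}) (B : rset n) : rset n :=
  fun r => B r /\ ~ subU U B r /\ ~ subU' U B r.

Definition eliminable n (U : {set 'I_n}) (R F : rset n) : Prop :=
  forall r0 r1, subU' U R r0 -> cl F r1 -> ~ subU U (cl R) (oplus r0 r1) ->
    exists r2, cl F r2 /\ sub0 U (cl R) (oplus (oplus r0 r1) r2).

Definition RUF n (U : {set 'I_n}) (R F : rset n) : rset n :=
  fun r => (exists r0 r1, subU' U R r0 /\ cl F r1 /\ r = oplus r0 r1)
           /\ sub0 U (cl R) r /\ r.1 <> r.2.

Definition reduced n (U : {set 'I_n}) (R F : rset n) : rset n :=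
  fun r => sub0 U R r \/ RUF U R F r.

Definition non_interacting n (U : {set 'I_n}) (R : rset n) : Prop :=
  forall r, R r -> \sum_(i in U) r.1 i <= 1 /\ \sum_(i in U) r.2 i <= 1.

Definition intermediate n (U : {set 'I_n}) (R : rset n) : Prop :=
  non_interacting U R /\
  forall i r, i \in U -> R r ->
    (r.1 i = 1 -> r.1 = [ffun j => (j == i : nat)]) /\
    (r.2 i = 1 -> r.2 = [ffun j => (j == i : nat)]).

Inductive leads n (R : rset n) : complex n -> complex n -> Prop :=
| leads_refl (x : complex n) : leads R x x
| leads_step (x x' y y' : complex n) : R (y, y') -> (forall i, y i <= x i) ->
    leads R [ffun i => x i - y i + y' i] x' -> leads R x x'.

(* Main.v *)
Require Import Defs.
From mathcomp Require Import all_boot.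
From mathcomp Require Import zify.
Set Implicit Arguments. Unset Strict Implicit. Unset Printing Implicit Defensive.

Definition fire n (x : complex n) (r : reaction n) : complex n :=
  [ffun i => x i - r.1 i + r.2 i].

Fixpoint tpath n (Q : rset n) (x : complex n) (s : seq (reaction n)) (x' : complex n) : Prop :=
  match s with
  | [::] => x = x'
  | r :: s => Q r /\ (forall i, r.1 i <= x i) /\ tpath Q (fire x r) s x'
  end.

Lemma oplusA n (a b c : reaction n) : oplus (oplus a b) c = oplus a (oplus b c).
Proof. rewrite /oplus /=; congr (_,_); apply/ffunP => i; rewrite !ffunE /=; try rewrite !ffunE; lia. Qed.

Lemma oplus0r n (b : reaction n) : oplus (zero_r n) b = b.
Proof. case: b => b1 b2; rewrite /oplus /zero_r /zero_c /=; congr (_,_); apply/ffunP => i; rewrite !ffunE /=; try rewrite !ffunE; lia. Qed.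

Lemma oplusr0 n (b : reaction n) : oplus b (zero_r n) = b.
Proof. case: b => b1 b2; rewrite /oplus /zero_r /zero_c /=; congr (_,_); apply/ffunP => i; rewrite !ffunE /=; try rewrite !ffunE; lia. Qed.

Lemma osum_cat n (s t : seq (reaction n)) : osum (s ++ t) = oplus (osum s) (osum t).
Proof. elim: s => [|a s IH] /=; first by rewrite oplus0r. by rewrite IH oplusA. Qed.

Lemma cl_oplus n (A : rset n) a b : cl A a -> cl A b -> cl A (oplus a b).
Proof.
move=> [s [Hs ->]] [t [Ht ->]]; exists (s ++ t); split; last by rewrite osum_cat.
by move=> x; rewrite mem_cat => /orP [/Hs|/Ht].
Qed.

Lemma cl_in n (A : rset n) a : A a -> cl A a.
Proof. move=> Ha; exists [:: a]; split; last by rewrite /= oplusr0.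
by move=> x; rewrite inE => /eqP ->. Qed.

Lemma cl0 n (A : rset n) : cl A (zero_r n).
Proof. by exists [::]. Qed.

Lemma cl_mono n (A B : rset n) : (forall r, A r -> B r) -> forall r, cl A r -> cl B r.
Proof. move=> H r [s [Hs ->]]; exists s; split => // x /Hs; exact: H. Qed.

Lemma leads_trans n (Q : rset n) x y z : leads Q x y -> leads Q y z -> leads Q x z.
Proof.
elim=> [//|x0 x1 y0 y1 HQ Hle _ IH] H; apply: leads_step HQ Hle _; exact: IH.
Qed.

Lemma leads_tpath n (Q : rset n) x x' : leads Q x x' -> exists s, tpath Q x s x'.
Proof.
elim=> [x0|x0 x1 y y' HQ Hle _ [s Hs]]; first by exists [::].
by exists ((y, y') :: s).
Qed.

Lemma fire_leads n (R : rset n) (r : reaction n) (x : complex n) : cl R r -> (forall i, r.1 i <= x i) -> leads R x (fire x r).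
Proof.
move=> [s [Hs ->]]; elim: s x Hs => [|a s IH] x Hs /=.
  move=> _; have -> : fire x (zero_r n) = x by apply/ffunP => i; rewrite /fire /zero_r /zero_c /= !ffunE; lia.
  exact: leads_refl.
move=> Hle.
have Ha : forall i, a.1 i <= x i by move=> i; have := Hle i; rewrite ffunE; lia.
case: a Hs Hle Ha => a1 a2 Hs Hle Ha.
apply: (leads_step (y := a1) (y' := a2)) => //; first by apply: Hs; rewrite inE eqxx.
set z := [ffun i => _].
have -> : fire x (oplus (a1, a2) (osum s)) = fire z (osum s).
  apply/ffunP => i; have := Hle i; rewrite /z !ffunE /=; lia.
apply: IH; first by move=> b bs; apply: Hs; rewrite inE bs orbT.
move=> i; have := Hle i; rewrite /z !ffunE /=; lia.
Qed.

Lemma part1 n (R : rset n) (U : {set 'I_n}) (F : rset n) :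
  (forall r, F r -> subU U R r) ->
  forall x x' : complex n, leads (reduced U R F) x x' -> leads R x x'.
Proof.
move=> HF x x'; elim=> [x0|x0 x1 y y' HQ Hle _ IH]; first exact: leads_refl.
apply: leads_trans IH.
case: HQ => [[HR _]|[[r0 [r1 [[Hr0 _] [Hr1 Heq]]]] _]].
  apply: (leads_step (y := y) (y' := y')) => //; exact: leads_refl.
have : cl R (y, y').
  rewrite Heq; apply: cl_oplus; first exact: cl_in.
  by apply: cl_mono Hr1 => r /HF [].
move=> Hcl; exact: (fire_leads Hcl Hle).
Qed.

Definition e n (i : 'I_n) : complex n := [ffun j => (j == i : nat)].
Definition Ufree n (U : {set 'I_n}) (y : complex n) := forall i, i \in U -> y i = 0.

Lemma fire_comm n (z : complex n) (a b : reaction n) :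
  (forall j, a.1 j + b.1 j <= z j) -> fire (fire z a) b = fire (fire z b) a.
Proof. move=> H; apply/ffunP => j; have := H j; rewrite !ffunE; lia. Qed.

Lemma fire_feas n (z : complex n) (a b : reaction n) :
  (forall j, a.1 j + b.1 j <= z j) -> forall j, b.1 j <= fire z a j.
Proof. move=> H j; have := H j; rewrite !ffunE; lia. Qed.

Lemma extract n (Q : rset n) (i : 'I_n) :
 (forall r, Q r -> 0 < r.1 i -> r.1 = e i) ->
 forall s z x', tpath Q z s x' -> 0 < z i -> x' i = 0 ->
 exists w s', Q (e i, w) /\ tpath Q (fire z (e i, w)) s' x' /\ size s' < size s.
Proof.
move=> HQ; elim=> [|r s IH] z x' /=.
  by move=> -> H0 H1; rewrite H1 in H0.
move=> [Qr [Hle Hp]] zi x'i.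
case: (posnP (r.1 i)) => [r1i | r1i]; last first.
  have He := HQ _ Qr r1i.
  have Er : (e i, r.2) = r by rewrite -He; case: (r).
  by exists r.2, s; rewrite Er.
have zi' : 0 < fire z r i by rewrite ffunE; lia.
have [w [s' [Qw [Hp' Hs]]]] := IH _ _ Hp zi' x'i.
have Hsum : forall j, (e i, w).1 j + r.1 j <= z j.
  move=> j; rewrite /= ffunE; case: (eqVneq j i) => [->|ne].
    by rewrite ?eqxx r1i /=; lia.
  by rewrite add0n.
exists w, (r :: s'); split => //; split; last by [].
split => //; split; first exact: fire_feas.
by rewrite fire_comm.
Qed.

Definition Pset n (U : {set 'I_n}) (R F : rset n) : rset n := fun r =>
  exists r0 r1, subU' U R r0 /\ cl F r1 /\ r = oplus r0 r1 /\ Ufree U r.1.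

Lemma ufree_set0 n (U : {set 'I_n}) (y : complex n) : Ufree U y -> supp y :&: U = set0.
Proof.
move=> H; apply/setP => j; rewrite !inE; case jU: (j \in U); last by rewrite andbF.
by rewrite H.
Qed.

Lemma set0_ufree n (U : {set 'I_n}) (y : complex n) : supp y :&: U = set0 -> Ufree U y.
Proof.
move=> H i iU; apply/eqP; rewrite -leqn0 leqNgt; apply/negP => yi.
have : i \in supp y :&: U by rewrite !inE yi iU.
by rewrite H inE.
Qed.

Lemma nonfree n (U : {set 'I_n}) (y : complex n) : supp y :&: U != set0 ->
  exists2 i, i \in U & 0 < y i.
Proof. by case/set0Pn => i; rewrite !inE => /andP [yi iU]; exists i. Qed.

Lemma inter_e n (U : {set 'I_n}) (R : rset n) q i :
  intermediate U R -> R q -> i \in U -> 0 < q.1 i -> q.1 = e i.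
Proof.
move=> [HN HI] Rq iU qi.
have [Hs _] := HN _ Rq.
have H1 : q.1 i <= \sum_(j in U) q.1 j by rewrite (bigD1 i) //= leq_addr.
have := (HI i q iU Rq).1; rewrite /e; apply; lia.
Qed.

Lemma main n (R : rset n) (U : {set 'I_n}) (F : rset n) :
  intermediate U R -> (forall r, F r <-> subU U R r) ->
  forall m s x x', size s <= m -> tpath (fun r => R r \/ Pset U R F r) x s x' ->
  Ufree U x -> Ufree U x' -> leads (reduced U R F) x x'.
Proof.
move=> HI HF; elim=> [|m IH] [|r s] x x' //=.
- by move=> _ -> _ _; exact: leads_refl.
- by move=> _ -> _ _; exact: leads_refl.
case: r => y y' /= Hsz [Qr [Hle Hp]] Hx Hx'.
have Hy : Ufree U y by move=> i iU; have := Hle i; rewrite Hx //; lia.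
case: (eqVneq (supp y' :&: U) set0) => H2.
- have Hy' := set0_ufree H2.
  have Hfx : Ufree U (fire x (y, y')).
    by move=> i iU; rewrite ffunE /= Hx // Hy // Hy'.
  case: Qr => [HR | [r0 [r1 [H0 [H1 [Heq _]]]]]].
    apply: (leads_step (y := y) (y' := y')) => //.
      left; split => //; split.
        by move=> [_]; rewrite /= ufree_set0 // eqxx.
      by move=> [_]; rewrite /= H2 eqxx.
    exact: (IH s).
  case: (eqVneq y y') => Eyy.
    subst y'; apply: (IH s) => //.
    by have -> : x = fire x (y, y) by apply/ffunP => j; rewrite ffunE /=; have := Hle j; lia.
  apply: (leads_step (y := y) (y' := y')) => //; last exact: (IH s).
  right; split; first by exists r0, r1.
  split; last by apply/eqP.
  split.
    rewrite Heq; apply: cl_oplus; first by case: H0 => /cl_in.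
    by apply: cl_mono H1 => r /HF [].
  split.
    by move=> [_]; rewrite /= ufree_set0 // eqxx.
  by move=> [_]; rewrite /= H2 eqxx.
have [i iU y'i] := nonfree H2.
have [r0 [r1 [H0 [H1 Heq]]]] : exists r0 r1, subU' U R r0 /\ cl F r1 /\ (y, y') = oplus r0 r1.
  case: Qr => [HR | [r0 [r1 [H0 [H1 [Heq _]]]]]]; last by exists r0, r1.
  exists (y, y'), (zero_r n); split; first by split.
  by split; [exact: cl0 | rewrite oplusr0].
have HQ : forall q, (R q \/ Pset U R F q) -> 0 < q.1 i -> q.1 = e i.
  move=> q [Rq|[q0 [q1 [_ [_ [_ Hq]]]]]] qi; first exact: inter_e HI Rq iU qi.
  by move: qi; rewrite Hq.
have Hfi : 0 < fire x (y, y') i by rewrite ffunE /=; lia.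
have [w [s' [Qw [Hp' Hs']]]] := extract HQ Hp Hfi (Hx' i iU).
have Rw : R (e i, w).
  case: Qw => [//|[q0 [q1 [_ [_ [_ Hq]]]]]].
  by move: (Hq i iU); rewrite /= ffunE eqxx.
have Fw : F (e i, w).
  apply/HF; split => //; apply/set0Pn; exists i; rewrite !inE /= ffunE eqxx iU.
  by [].
have Hey : forall j, e i j <= y' j.
  by move=> j; rewrite ffunE; case: (eqVneq j i) => [->|ne]; rewrite ?eqxx ?(negbTE ne) //=.
set r' := oplus (y, y') (e i, w).
have E1 : forall j, r'.1 j = y j.
  move=> j; have := Hey j; rewrite /r' /= !ffunE; lia.
apply: (IH (r' :: s')) => //=; first by apply: leq_trans Hs' _.
split.
  right; exists r0, (oplus r1 (e i, w)); split => //; split.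
    by apply: cl_oplus H1 (cl_in Fw).
  split; first by rewrite /r' Heq oplusA.
  by move=> j jU; rewrite E1 Hy.
split; first by move=> j; rewrite E1.
suff -> : fire x r' = fire (fire x (y, y')) (e i, w) by [].
apply/ffunP => j; have := Hey j; have := Hle j; rewrite /r' !ffunE /=; lia.
Qed.

Theorem theorem5p6 (n : nat) (R : rset n) (U : {set 'I_n}) (F : rset n) :
  is_RN R ->
  (forall r, F r -> subU U R r) ->
  eliminable U R F ->
  (forall x x' : complex n, leads (reduced U R F) x x' -> leads R x x') /\
  (intermediate U R -> (forall r, F r <-> subU U R r) ->
   forall x x' : complex n, (supp x :|: supp x') :&: U = set0 ->
   leads R x x' -> leads (reduced U R F) x x').
Proof.
move=> _ HF _; split; first exact: part1.
move=> HI HFF x x' Hs Hl.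
have [s Hp] := leads_tpath Hl.
have Hx : Ufree U x.
  move=> j jU; apply/eqP; rewrite -leqn0 leqNgt; apply/negP => xj.
  have : j \in (supp x :|: supp x') :&: U by rewrite !inE xj jU.
  by rewrite Hs inE.
have Hx' : Ufree U x'.
  move=> j jU; apply/eqP; rewrite -leqn0 leqNgt; apply/negP => xj.
  have : j \in (supp x :|: supp x') :&: U by rewrite !inE xj jU orbT.
  by rewrite Hs inE.
apply: (main HI HFF (leqnn (size s))) => //.
elim: s x Hp {Hl Hx Hs} => [|r s IH] z /=; first by [].
by move=> [Qr [Hle Hp']]; split; [left | split => //; exact: IH].
Qed.
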